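(* Let $X$ be a strong locally super-compact $L$-topological space. Then $({\rm pt}_L\mathcal O(X),{\rm sub}_{\mathcal O(X)})$ is an algebraic $L$-dcpo.
   Context: $L$ is a frame with implication $\to$. $L$-subsets: maps to $L$; nonempty: $\bigvee A=1$; ${\rm sub}_X(A,B)=\bigwedge_xA(x)\to B(x)$. $L$-topology: $\mathcal O(X)\subseteq L^X$ closed under finite meets and arbitrary joins containing all constants $a_X$. Base: $\mathcal B\subseteq\mathcal O(X)$ with $A=\bigvee_{B\in\mathcal B}{\rm sub}_X(B,A)\wedge B$ for each open $A$. Super-compact: nonempty $A$ with ${\rm sub}_X(A,\bigvee_iV_i)=\bigvee_i{\rm sub}_X(A,V_i)$ for all families of open $V_i$. Strong locally super-compact: has a base of super-compact open sets. A point of $\mathcal O(X)$: $p:\mathcal O(X)\to L$ with $p(A\wedge B)=p(A)\wedge p(B)$, $p(\bigvee_iA_i)=\bigvee_ip(A_i)$, $p(\lambda_X)=\lambda$; ${\rm pt}_L\mathcal O(X)$ the set of points, with ${\rm sub}_{\mathcal O(X)}(p,q)=\bigwedge_{A\in\mathcal O(X)}p(A)\to q(A)$. For an $L$-ordered set $(P,e)$: ${\downarrow}y(x)=e(x,y)$; $\sqcup A=x$ iff $e(x,y)={\rm sub}_P(A,{\downarrow}y)$ for all $y$; directed: nonempty with $D(x)\wedge D(y)\le\bigvee_zD(z)\wedge e(x,z)\wedge e(y,z)$; ideal: directed lower set; $L$-dcpo: all directed $L$-subsets have suprema; ${\Downarrow}x(y)=\bigwedge\{e(x,\sqcup I)\to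 I(y):I\text{ ideal with a supremum}\}$; compact: ${\Downarrow}x(x)=1$; $K(P)$ compact elements; $k(x)(y)=e(y,x)$ for $y\in K(P)$, $0$ otherwise; algebraic $L$-dcpo: $L$-dcpo with each $k(x)$ directed and $\sqcup k(x)=x$. *)

(* Defs.v *)
From Stdlib Require Import ClassicalEpsilon.

Set Implicit Arguments.
Unset Strict Implicit.

(* A frame is a complete lattice with an implication right adjoint to meet;
   meets then distribute over arbitrary joins. *)
Record frame := Frame {
  car :> Type;
  le : car -> car -> Prop;
  sup : (car -> Prop) -> car;
  inf : (car -> Prop) -> car;
  imp : car -> car -> car;
  le_refl : forall a, le a a;
  le_trans : forall a b c, le a b -> le b c -> le a c;
  le_antisym : forall a b, le a b -> le b a -> a = b;
  sup_ub : forall (S : car -> Prop) a, S a -> le a (sup S);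
  sup_least : forall (S : car -> Prop) b, (forall a, S a -> le a b) -> le (sup S) b;
  inf_lb : forall (S : car -> Prop) a, S a -> le (inf S) a;
  inf_greatest : forall (S : car -> Prop) b, (forall a, S a -> le b a) -> le b (inf S);
  imp_adj : forall a b c,
    le (inf (fun x => x = a \/ x = b)) c <-> le a (imp b c)
}.

Section FrameOps.
Variable L : frame.
Definition meet (a b : L) : L := inf (fun x => x = a \/ x = b).
Definition top : L := inf (fun _ => False).
Definition bot : L := sup (fun _ => False).
Definition Sup {I : Type} (f : I -> L) : L := sup (fun a => exists i, f i = a).
Definition Inf {I : Type} (f : I -> L) : L := inf (fun a => exists i, f i = a).
End FrameOps.

Arguments top {L}.
Arguments bot {L}.

Section LSubsets.
Variables (L : frame) (X : Type).
Definition nonemptyL (A : X -> L) : Prop := Sup A = top.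
Definition subL (A B : X -> L) : L := Inf (fun x => imp (A x) (B x)).
End LSubsets.

Section LTop.
Variables (L : frame) (X : Type).

Record is_Ltopology (O : (X -> L) -> Prop) : Prop := {
  top_meet : forall A B, O A -> O B -> O (fun x => meet (A x) (B x));
  top_join : forall (I : Type) (f : I -> X -> L),
      (forall i, O (f i)) -> O (fun x => Sup (fun i => f i x));
  top_const : forall a : L, O (fun _ => a)
}.

Variable O : (X -> L) -> Prop.

Definition is_base (B : (X -> L) -> Prop) : Prop :=
  (forall U, B U -> O U) /\
  forall A, O A -> forall x,
    A x = Sup (fun U : {U : X -> L | B U} =>
                 meet (subL (proj1_sig U) A) (proj1_sig U x)).

Definition super_compact (A : X -> L) : Prop :=
  nonemptyL A /\
  forall (I : Type) (V : I -> X -> L), (forall i, O (V i)) ->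
    subL A (fun x => Sup (fun i => V i x)) = Sup (fun i => subL A (V i)).

Definition strong_locally_super_compact : Prop :=
  exists B, is_base B /\ forall U, B U -> super_compact U.

Definition Opens := {A : X -> L | O A}.

Record is_point (p : Opens -> L) : Prop := {
  pt_meet : forall A B C : Opens,
      (forall x, proj1_sig C x = meet (proj1_sig A x) (proj1_sig B x)) ->
      p C = meet (p A) (p B);
  pt_join : forall (I : Type) (f : I -> Opens) (C : Opens),
      (forall x, proj1_sig C x = Sup (fun i => proj1_sig (f i) x)) ->
      p C = Sup (fun i => p (f i));
  pt_const : forall (a : L) (C : Opens),
      (forall x, proj1_sig C x = a) -> p C = a
}.

Definition ptL := {p : Opens -> L | is_point p}.

Definition sub_pt (p q : ptL) : L :=
  Inf (fun A : Opens => imp (proj1_sig p A) (proj1_sig q A)).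
End LTop.

Section LOrd.
Variables (L : frame) (P : Type) (e : P -> P -> L).

Record L_ordered : Prop := {
  lo_refl : forall x, e x x = top;
  lo_trans : forall x y z, le (meet (e x y) (e y z)) (e x z);
  lo_antisym : forall x y, e x y = top -> e y x = top -> x = y
}.

Definition down (y : P) : P -> L := fun x => e x y.

Definition is_supL (A : P -> L) (x : P) : Prop :=
  forall y, e x y = subL A (down y).

Definition directed (D : P -> L) : Prop :=
  nonemptyL D /\
  forall x y, le (meet (D x) (D y))
                 (Sup (fun z => meet (D z) (meet (e x z) (e y z)))).

Definition lower_set (D : P -> L) : Prop :=
  forall x y, le (meet (D y) (e x y)) (D x).

Definition ideal (D : P -> L) : Prop := directed D /\ lower_set D.

Definition L_dcpo : Prop :=
  L_ordered /\ forall D, directed D -> exists x, is_supL D x.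

Definition way_below (x : P) (y : P) : L :=
  inf (fun a => exists (I : P -> L) (s : P),
         ideal I /\ is_supL I s /\ a = imp (e x s) (I y)).

Definition compact (x : P) : Prop := way_below x x = top.

Definition kL (x : P) : P -> L := fun y =>
  if excluded_middle_informative (compact y) then e y x else bot.

Definition algebraic_L_dcpo : Prop :=
  L_dcpo /\ forall x, directed (kL x) /\ is_supL (kL x) x.
End LOrd.

(* Main.v *)
Require Import Defs.
From Stdlib Require Import FunctionalExtensionality ProofIrrelevance ClassicalEpsilon.

Section F.
Context {L : frame}.
Implicit Types a b c d : L.

Lemma meet_l a b : le (meet a b) a. Proof. apply inf_lb. left; reflexivity. Qed.
Lemma meet_r a b : le (meet a b) b. Proof. apply inf_lb. right; reflexivity. Qed.
Lemma meet_glb a b c : le c a -> le c b -> le c (meet a b).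
Proof. intros H1 H2. apply inf_greatest. intros x [->| ->]; assumption. Qed.
Lemma le_top a : le a top. Proof. apply inf_greatest. intros _ []. Qed.
Lemma bot_le a : le bot a. Proof. apply sup_least. intros _ []. Qed.
Lemma top_eq a : le top a -> a = top. Proof. intros; apply le_antisym; auto using le_top. Qed.
Lemma imp_intro a b c : le (meet c a) b -> le c (imp a b). Proof. apply imp_adj. Qed.
Lemma imp_elim a b c : le c (imp a b) -> le (meet c a) b. Proof. apply imp_adj. Qed.
Lemma mp a b : le (meet (imp a b) a) b. Proof. apply imp_elim, le_refl. Qed.
Lemma Sup_ub {I} (f : I -> L) i : le (f i) (Sup f). Proof. apply sup_ub. eauto. Qed.
Lemma Sup_least {I} (f : I -> L) b : (forall i, le (f i) b) -> le (Sup f) b.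
Proof. intros H. apply sup_least. intros a [i <-]. auto. Qed.
Lemma Inf_lb {I} (f : I -> L) i : le (Inf f) (f i). Proof. apply inf_lb. eauto. Qed.
Lemma Inf_greatest {I} (f : I -> L) b : (forall i, le b (f i)) -> le b (Inf f).
Proof. intros H. apply inf_greatest. intros a [i <-]. auto. Qed.
Lemma meet_comm a b : le (meet a b) (meet b a).
Proof. apply meet_glb; [apply meet_r|apply meet_l]. Qed.
Lemma meet_mono a b c d : le a c -> le b d -> le (meet a b) (meet c d).
Proof. intros; apply meet_glb; eapply le_trans; [apply meet_l| |apply meet_r|]; auto. Qed.
Lemma meet_Sup_l {I} (f : I -> L) y z : (forall i, le (meet (f i) y) z) -> le (meet (Sup f) y) z.
Proof. intros H. apply imp_elim, Sup_least. intros i; apply imp_intro; auto. Qed.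
Lemma meet_Sup_r {I} (f : I -> L) y z : (forall i, le (meet y (f i)) z) -> le (meet y (Sup f)) z.
Proof. intros H. eapply le_trans; [apply meet_comm|]. apply meet_Sup_l.
  intros i; eapply le_trans; [apply meet_comm|]; auto. Qed.
Lemma le_meet_top a : le a (meet top a). Proof. apply meet_glb; [apply le_top|apply le_refl]. Qed.
Lemma le_meet_top_r a : le a (meet a top). Proof. apply meet_glb; [apply le_refl|apply le_top]. Qed.
Lemma meet_bot_l a b : le (meet bot a) b. Proof. eapply le_trans; [apply meet_l|apply bot_le]. Qed.
Lemma meet_bot_r a b : le (meet a bot) b. Proof. eapply le_trans; [apply meet_r|apply bot_le]. Qed.
Lemma imp_top_le a b : le top (imp a b) -> le a b.
Proof. intros H. eapply le_trans; [apply le_meet_top|]. apply imp_elim; auto. Qed.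
End F.

Ltac mproj := first [ apply le_refl | eapply le_trans; [apply meet_l|]; mproj | eapply le_trans; [apply meet_r|]; mproj ].
Ltac msolve := repeat (apply meet_glb); mproj.

Ltac inflb i := unfold subL, sub_pt; match goal with |- le (Inf ?f) _ => exact (Inf_lb f i) end.

Ltac supub i := match goal with |- le _ (Sup ?f) => exact (Sup_ub f i) end.

Section Main.
Variables (L : frame) (X : Type) (O : (X -> L) -> Prop).
Hypothesis HO : is_Ltopology O.
Variable B : (X -> L) -> Prop.
Hypothesis HB : is_base O B.
Hypothesis HSC : forall U, B U -> super_compact O U.

Notation P := (ptL O).
Notation e := (@sub_pt L X O).
Notation BT := {U : X -> L | B U}.

Definition ptm (p : Opens O -> L) (Hp : is_point p) A C M H := @pt_meet L X O p Hp A C M H.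
Definition ptj (p : Opens O -> L) (Hp : is_point p) I f C H := @pt_join L X O p Hp I f C H.
Definition ptc (p : Opens O -> L) (Hp : is_point p) a C H := @pt_const L X O p Hp a C H.
Arguments ptm [p] Hp A C M H.
Arguments ptj [p] Hp [I] f C H.
Arguments ptc [p] Hp a C H.

Definition oconst (a : L) : Opens O := exist _ (fun _ => a) (top_const HO a).
Definition omeet (A C : Opens O) : Opens O :=
  exist _ (fun x => meet (proj1_sig A x) (proj1_sig C x))
    (top_meet HO (proj2_sig A) (proj2_sig C)).
Definition ob (W : BT) : Opens O := exist _ (proj1_sig W) (proj1 HB _ (proj2_sig W)).

Lemma pt_mono {p : Opens O -> L} (Hp : is_point p) (A C : Opens O) :
  (forall x, le (proj1_sig A x) (proj1_sig C x)) -> le (p A) (p C).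
Proof.
  intros H. rewrite (ptm Hp A C A).
  - apply meet_r.
  - intros x. apply le_antisym; [apply meet_glb; [apply le_refl|apply H]|apply meet_l].
Qed.

Lemma subL_mono (U A C : X -> L) : (forall x, le (A x) (C x)) -> le (subL U A) (subL U C).
Proof.
  intros H. unfold subL. apply Inf_greatest. intros x. eapply le_trans; [inflb x|].
  apply imp_intro. eapply le_trans; [apply mp|]. auto.
Qed.

Lemma key (q : P) (W : BT) (A : Opens O) :
  le (meet (proj1_sig q (ob W)) (subL (proj1_sig W) (proj1_sig A))) (proj1_sig q A).
Proof.
  destruct q as [q Hq]; simpl.
  set (s := subL (proj1_sig W) (proj1_sig A)).
  rewrite <- (ptc Hq s (oconst s)) by reflexivity.
  rewrite <- (ptm Hq (ob W) (oconst s) (omeet (ob W) (oconst s))) by reflexivity.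
  apply (pt_mono Hq _ _). intros x; simpl; unfold s, subL.
  eapply le_trans; [|apply (mp (proj1_sig W x))].
  apply meet_glb; [eapply le_trans; [apply meet_r|inflb x]|apply meet_l].
Qed.

Lemma decomp (q : P) (A : Opens O) :
  proj1_sig q A = Sup (fun W : BT => meet (subL (proj1_sig W) (proj1_sig A)) (proj1_sig q (ob W))).
Proof.
  destruct q as [q Hq]; simpl.
  rewrite (ptj Hq (fun W : BT => omeet (oconst (subL (proj1_sig W) (proj1_sig A))) (ob W)) A).
  - f_equal. apply functional_extensionality. intros W.
    rewrite (ptm Hq (oconst (subL (proj1_sig W) (proj1_sig A))) (ob W) (omeet (oconst (subL (proj1_sig W) (proj1_sig A))) (ob W))) by reflexivity.
    rewrite (ptc Hq (subL (proj1_sig W) (proj1_sig A)) (oconst _)) by reflexivity. reflexivity.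
  - intros x. simpl. apply (proj2 HB _ (proj2_sig A) x).
Qed.

Lemma cover (q : P) : le top (Sup (fun W : BT => proj1_sig q (ob W))).
Proof.
  rewrite <- (ptc (proj2_sig q) top (oconst top)) by reflexivity.
  rewrite decomp. apply Sup_least. intros W. eapply le_trans; [apply meet_r|supub W].
Qed.

Definition bp_fun (W : BT) : Opens O -> L := fun A => subL (proj1_sig W) (proj1_sig A).

Lemma bp_is_point W : is_point (bp_fun W).
Proof.
  destruct W as [U HU]; unfold bp_fun; simpl. constructor.
  all: unfold subL in *.
  - intros A C D HD. apply le_antisym.
    + apply meet_glb; apply subL_mono; intros x; rewrite HD; [apply meet_l|apply meet_r].
    + apply Inf_greatest; intros x. apply imp_intro. rewrite HD.
      apply meet_glb.
      * eapply le_trans; [|apply (mp (U x))]. apply meet_glb; [|apply meet_r].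
        eapply le_trans; [apply meet_l|]. eapply le_trans; [apply meet_l|inflb x].
      * eapply le_trans; [|apply (mp (U x))]. apply meet_glb; [|apply meet_r].
        eapply le_trans; [apply meet_l|]. eapply le_trans; [apply meet_r|inflb x].
  - intros I f C HC.
    assert (E : proj1_sig C = fun x => Sup (fun i => proj1_sig (f i) x))
      by (apply functional_extensionality; exact HC).
    rewrite E. apply (proj2 (HSC _ HU)). intros i; exact (proj2_sig (f i)).
  - intros a C HC.
    assert (E : proj1_sig C = fun _ => a) by (apply functional_extensionality; exact HC).
    rewrite E. apply le_antisym.
    + eapply le_trans; [apply le_meet_top_r|].
      rewrite <- (proj1 (HSC _ HU)). apply meet_Sup_r. intros x.
      eapply le_trans; [|apply (mp (U x))]. apply meet_mono; [inflb x|apply le_refl].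
    + apply Inf_greatest; intros x. apply imp_intro, meet_l.
Qed.

Definition bp (W : BT) : P := exist _ (bp_fun W) (bp_is_point W).

Lemma e_bp (q : P) W : e (bp W) q = proj1_sig q (ob W).
Proof.
  apply le_antisym.
  - eapply le_trans; [apply (Inf_lb _ (ob W))|]. simpl. unfold bp_fun; simpl.
    eapply le_trans; [apply le_meet_top_r|]. eapply le_trans; [|apply mp].
    apply meet_mono; [apply le_refl|]. apply Inf_greatest. intros x. apply imp_intro, meet_r.
  - apply Inf_greatest. intros A. apply imp_intro. apply key.
Qed.

Lemma e_refl (p : P) : e p p = top.
Proof. apply top_eq, Inf_greatest. intros A. apply imp_intro, meet_r. Qed.

Lemma e_trans (x y z : P) : le (meet (e x y) (e y z)) (e x z).
Proof.
  apply Inf_greatest. intros A. apply imp_intro.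
  eapply le_trans; [|apply (mp (proj1_sig y A))]. apply meet_glb.
  - eapply le_trans; [apply meet_l|]. eapply le_trans; [apply meet_r|inflb A].
  - eapply le_trans; [|apply (mp (proj1_sig x A))]. apply meet_glb; [|apply meet_r].
    eapply le_trans; [apply meet_l|]. eapply le_trans; [apply meet_l|inflb A].
Qed.

Lemma e_ord : L_ordered e.
Proof.
  constructor.
  - apply e_refl.
  - apply e_trans.
  - intros [p Hp] [q Hq] H1 H2.
    assert (p = q).
    { apply functional_extensionality. intros A. apply le_antisym; apply imp_top_le.
      - rewrite <- H1. apply (Inf_lb (fun A => imp (p A) (q A)) A).
      - rewrite <- H2. apply (Inf_lb (fun A => imp (q A) (p A)) A). }
    subst. f_equal. apply proof_irrelevance.
Qed.

Section DSup.
Variable D : P -> L.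
Hypothesis HD : directed e D.

Definition ds_fun (A : Opens O) : L := Sup (fun p : P => meet (D p) (proj1_sig p A)).

Lemma ds_is_point : is_point ds_fun.
Proof.
  unfold ds_fun. constructor.
  - intros A C M HM. apply le_antisym.
    + apply Sup_least. intros p. rewrite (ptm (proj2_sig p) A C M HM).
      apply meet_glb; [eapply le_trans; [|supub p]|eapply le_trans; [|supub p]];
      apply meet_mono; (apply le_refl || apply meet_l || apply meet_r).
    + apply meet_Sup_l. intros p. apply meet_Sup_r. intros q.
      eapply le_trans with (meet (meet (D p) (D q)) (meet (proj1_sig p A) (proj1_sig q C))).
      { apply meet_glb; apply meet_glb; msolve. }
      eapply le_trans; [apply meet_mono; [apply (proj2 HD p q)|apply le_refl]|].
      apply meet_Sup_l. intros r. eapply le_trans; [|supub r].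
      rewrite (ptm (proj2_sig r) A C M HM).
      apply meet_glb; [msolve|]. apply meet_glb.
      * eapply le_trans; [|apply (mp (proj1_sig p A))]. apply meet_glb; [|msolve].
        eapply le_trans; [|apply (Inf_lb (fun A => imp (proj1_sig p A) (proj1_sig r A)) A)]. msolve.
      * eapply le_trans; [|apply (mp (proj1_sig q C))]. apply meet_glb; [|msolve].
        eapply le_trans; [|apply (Inf_lb (fun A => imp (proj1_sig q A) (proj1_sig r A)) C)]. msolve.
  - intros I f C HC. apply le_antisym.
    + apply Sup_least. intros p. rewrite (ptj (proj2_sig p) f C HC).
      apply meet_Sup_r. intros i. eapply le_trans; [|supub i].
      eapply le_trans; [|supub p]. apply le_refl.
    + apply Sup_least. intros i. apply Sup_least. intros p.
      eapply le_trans; [|supub p]. apply meet_mono; [apply le_refl|].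
      rewrite (ptj (proj2_sig p) f C HC). apply (Sup_ub (fun i => proj1_sig p (f i)) i).
  - intros a C HC. apply le_antisym.
    + apply Sup_least. intros p. rewrite (ptc (proj2_sig p) a C HC). apply meet_r.
    + eapply le_trans; [apply le_meet_top|]. rewrite <- (proj1 HD).
      apply meet_Sup_l. intros p. eapply le_trans; [|supub p].
      rewrite (ptc (proj2_sig p) a C HC). apply le_refl.
Qed.

Definition dsup : P := exist _ ds_fun ds_is_point.

Lemma dsup_sup : is_supL e D dsup.
Proof.
  intros y. unfold subL, down. apply le_antisym.
  - apply Inf_greatest. intros p. apply imp_intro. apply Inf_greatest. intros A. apply imp_intro.
    eapply le_trans; [|apply (mp (proj1_sig dsup A))]. apply meet_glb.
    + eapply le_trans; [apply meet_l|]. eapply le_trans; [apply meet_l|inflb A].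
    + eapply le_trans; [|exact (Sup_ub (fun p => meet (D p) (proj1_sig p A)) p)]. apply meet_mono; [apply meet_r|apply le_refl].
  - apply Inf_greatest. intros A. apply imp_intro. simpl; unfold ds_fun.
    apply meet_Sup_r. intros p.
    eapply le_trans; [|apply (mp (proj1_sig p A))]. apply meet_glb; [|msolve].
    eapply le_trans; [|apply (Inf_lb (fun A => imp (proj1_sig p A) (proj1_sig y A)) A)].
    eapply le_trans; [|apply (mp (D p))]. apply meet_glb; [|msolve].
    eapply le_trans; [apply meet_l|apply (Inf_lb (fun p => imp (D p) (e p y)) p)].
Qed.
End DSup.

Lemma sup_le (D : P -> L) (s s' : P) : is_supL e D s -> is_supL e D s' ->
  forall A, le (proj1_sig s A) (proj1_sig s' A).
Proof.
  intros H H' A. assert (E : e s s' = top).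
  { rewrite (H s'), <- (H' s'). apply e_refl. }
  apply imp_top_le. rewrite <- E. apply (Inf_lb (fun A => imp (proj1_sig s A) (proj1_sig s' A)) A).
Qed.

Lemma compact_bp W : compact e (bp W).
Proof.
  unfold compact, way_below. apply top_eq, inf_greatest.
  intros a (I & s & [HId HIl] & Hs & ->). apply imp_intro.
  eapply le_trans; [apply meet_r|]. rewrite e_bp.
  eapply le_trans; [apply (sup_le _ _ _ Hs (dsup_sup _ HId))|]. simpl; unfold ds_fun.
  apply Sup_least. intros p. rewrite <- e_bp. apply HIl.
Qed.

Definition Ix (x : P) (q : P) : L := Sup (fun W : BT => meet (proj1_sig x (ob W)) (e q (bp W))).

Lemma Idir x q1 q2 : le (meet (Ix x q1) (Ix x q2))
  (Sup (fun W : BT => meet (proj1_sig x (ob W)) (meet (e q1 (bp W)) (e q2 (bp W))))).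
Proof.
  apply meet_Sup_l; intros U. apply meet_Sup_r; intros V.
  set (M := omeet (ob U) (ob V)).
  eapply le_trans with (meet (proj1_sig x M) (meet (e q1 (bp U)) (e q2 (bp V)))).
  { rewrite (ptm (proj2_sig x) (ob U) (ob V) M) by reflexivity. apply meet_glb; [apply meet_glb|]; msolve. }
  rewrite decomp. apply meet_Sup_l. intros W. eapply le_trans; [|supub W].
  apply meet_glb; [msolve|]. apply meet_glb.
  - eapply le_trans; [|apply e_trans with (y := bp U)]. apply meet_glb; [msolve|].
    rewrite e_bp. simpl. unfold bp_fun. eapply le_trans; [apply meet_l|]. eapply le_trans; [apply meet_l|].
    apply subL_mono. intros; apply meet_l.
  - eapply le_trans; [|apply e_trans with (y := bp V)]. apply meet_glb; [msolve|].
    rewrite e_bp. simpl. unfold bp_fun. eapply le_trans; [apply meet_l|]. eapply le_trans; [apply meet_l|].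
    apply subL_mono. intros; apply meet_r.
Qed.

Lemma Ix_bp x W : le (proj1_sig x (ob W)) (Ix x (bp W)).
Proof.
  unfold Ix. eapply le_trans; [|supub W]. apply meet_glb; [apply le_refl|]. rewrite e_refl. apply le_top.
Qed.

Lemma Ix_ideal x : ideal e (Ix x).
Proof.
  split; [split|].
  - apply top_eq. eapply le_trans; [apply cover|]. apply Sup_least. intros W.
    eapply le_trans; [apply Ix_bp|supub (bp W)].
  - intros q1 q2. eapply le_trans; [apply Idir|]. apply Sup_least. intros W.
    eapply le_trans; [|supub (bp W)]. apply meet_mono; [apply Ix_bp|apply le_refl].
  - intros p q. unfold Ix. apply meet_Sup_l. intros W. eapply le_trans; [|supub W].
    apply meet_glb; [msolve|]. eapply le_trans; [|apply e_trans with (y := q)].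
    apply meet_glb; msolve.
Qed.

Lemma sup_char (F : P -> L) (x : P) :
  (forall y, le (F y) (e y x)) -> (forall W, le (proj1_sig x (ob W)) (F (bp W))) ->
  is_supL e F x.
Proof.
  intros H1 H2 z. unfold subL, down. apply le_antisym.
  - apply Inf_greatest. intros y. apply imp_intro.
    eapply le_trans; [|apply e_trans with (y := x)]. apply meet_glb.
    + eapply le_trans; [apply meet_r|apply H1].
    + apply meet_l.
  - apply Inf_greatest. intros A. apply imp_intro. rewrite (decomp x A).
    apply meet_Sup_r. intros W. eapply le_trans; [|apply (key z W A)].
    apply meet_glb; [|msolve]. rewrite <- (e_bp z W).
    eapply le_trans; [|apply (mp (F (bp W)))]. apply meet_glb.
    + eapply le_trans; [apply meet_l|apply (Inf_lb (fun y => imp (F y) (e y z)) (bp W))].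
    + eapply le_trans; [|apply H2]. msolve.
Qed.

Lemma Ix_sup x : is_supL e (Ix x) x.
Proof.
  apply sup_char; [|apply Ix_bp].
  intros y. apply Sup_least. intros W. eapply le_trans; [|apply e_trans with (y := bp W)].
  rewrite e_bp. apply meet_comm.
Qed.

Lemma compact_le x y : compact e y -> le (e y x) (Ix x y).
Proof.
  intros H. apply imp_top_le. rewrite <- H. apply inf_lb.
  exists (Ix x), x. split; [apply Ix_ideal|split; [apply Ix_sup|reflexivity]].
Qed.

Lemma kL_c x y : compact e y -> kL e x y = e y x.
Proof. intros H. unfold kL. destruct excluded_middle_informative; [reflexivity|contradiction]. Qed.
Lemma kL_nc x y : ~ compact e y -> kL e x y = bot.
Proof. intros H. unfold kL. destruct excluded_middle_informative; [contradiction|reflexivity]. Qed.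
Lemma kL_bp x W : kL e x (bp W) = proj1_sig x (ob W).
Proof. rewrite kL_c by apply compact_bp. apply e_bp. Qed.

Lemma main : algebraic_L_dcpo e.
Proof.
  split; [split; [apply e_ord|]|].
  - intros D HD. exists (dsup _ HD). apply dsup_sup.
  - intros x. split; [split|].
    + apply top_eq. eapply le_trans; [apply cover|]. apply Sup_least. intros W.
      rewrite <- kL_bp. supub (bp W).
    + intros y1 y2.
      destruct (classic (compact e y1)) as [c1|c1]; [|rewrite (kL_nc x _ c1); apply meet_bot_l].
      destruct (classic (compact e y2)) as [c2|c2]; [|rewrite (kL_nc x _ c2); apply meet_bot_r].
      rewrite (kL_c x _ c1), (kL_c x _ c2).
      eapply le_trans; [apply meet_mono; apply compact_le; assumption|].
      eapply le_trans; [apply Idir|]. apply Sup_least. intros W.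
      eapply le_trans; [|supub (bp W)]. rewrite kL_bp. apply le_refl.
    + apply sup_char.
      * intros y. destruct (classic (compact e y)) as [c|c].
        -- rewrite (kL_c x _ c). apply le_refl.
        -- rewrite (kL_nc x _ c). apply bot_le.
      * intros W. rewrite kL_bp. apply le_refl.
Qed.
End Main.

Theorem theorem5p7 (L : frame) (X : Type) (O : (X -> L) -> Prop)
  (HO : is_Ltopology O) (HX : strong_locally_super_compact O) :
  algebraic_L_dcpo (@sub_pt L X O).
Proof.
  destruct HX as [B [HB HSC]]. exact (main L X O HO B HB HSC).
Qed.
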